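(* Let $\mathbf{C}$ be a locally small category, $\Omega$ an object, $\Phi\colon\mathbf{C}^{\mathrm{op}}\to\mathbf{Pos}$ a functor whose fibres have all meets preserved by reindexing $f^*=\Phi f$, and $d_\Omega\in\Phi\Omega$. Let $\alpha_Y(S)=\bigwedge_{k\in S}k^*(d_\Omega)$, $\gamma_Y(d)=\{k\in\mathbf{C}(Y,\Omega)\mid d\preceq k^*(d_\Omega)\}$ and $\mathrm{cl}_Y=\gamma_Y\circ\alpha_Y$. Let $F\colon\mathbf{C}\to\mathbf{C}$ be a functor, $(\mathit{ev}_\lambda\colon F\Omega\to\Omega)_{\lambda\in\Lambda}$ morphisms, $\Lambda_Y(S)=\{\mathit{ev}_\lambda\circ Fh\mid\lambda\in\Lambda,h\in S\}$, and $\mathcal{K}_X=\alpha_{FX}\circ\Lambda_X\circ\gamma_X\colon\Phi X\to\Phi(FX)$. Let $\mathrm{cl}'_X$ be a closure operator on $(\mathcal{P}(\mathbf{C}(X,\Omega)),\subseteq)$ with $\mathrm{cl}'_X\subseteq\mathrm{cl}_X$ pointwise. Then $\mathrm{cl}'_X$ is compatible (i.e. $\Lambda_X\circ\mathrm{cl}'_X\circ\mathrm{cl}_X\subseteq\mathrm{cl}_{FX}\circ\Lambda_X\circ\mathrm{cl}'_X$ pointwise) if and only if the depth-1 self-separation property holds: for every $d\in\Phi X$ and every $S\subseteq\mathbf{C}(X,\Omega)$ with $S=\mathrm{cl}'_X(S)$ and $\alpha_X(S)=d$, we have $\alpha_{FX}(\Lambda_X(S))=\mathcal{K}_X(d)$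.
   Context: A closure operator is a monotone, idempotent, extensive map. A set $S$ of predicates is called initial for $d$ if $\alpha_X(S)=d$. *)

(* Defs.v *)
From Stdlib Require Import Classical.
Set Implicit Arguments.
Unset Strict Implicit.

Record Category := {
  Ob : Type;
  Hom : Ob -> Ob -> Type;
  idm : forall A, Hom A A;
  comp : forall A B D, Hom B D -> Hom A B -> Hom A D;
  comp_id_l : forall A B (f : Hom A B), comp (idm B) f = f;
  comp_id_r : forall A B (f : Hom A B), comp f (idm A) = f;
  comp_assoc : forall A B D E (h : Hom D E) (g : Hom B D) (f : Hom A B),
      comp h (comp g f) = comp (comp h g) f
}.
Arguments Hom : clear implicits.
Arguments idm {c} A.
Arguments comp {c A B D} _ _.

Record EndoFunctor (C : Category) := {
  Fob : Ob C -> Ob C;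
  Fmap : forall A B, Hom C A B -> Hom C (Fob A) (Fob B);
  Fmap_id : forall A, Fmap (idm A) = idm (Fob A);
  Fmap_comp : forall A B D (g : Hom C B D) (f : Hom C A B),
      Fmap (comp g f) = comp (Fmap g) (Fmap f)
}.
Arguments Fob {C} _ _.
Arguments Fmap {C} _ {A B} _.

Record PosFibration (C : Category) := {
  fib : Ob C -> Type;
  le : forall X, fib X -> fib X -> Prop;
  le_refl : forall X (p : fib X), le p p;
  le_trans : forall X (p q r : fib X), le p q -> le q r -> le p r;
  le_antisym : forall X (p q : fib X), le p q -> le q p -> p = q;
  reindex : forall X Y, Hom C X Y -> fib Y -> fib X;
  reindex_mono : forall X Y (f : Hom C X Y) (p q : fib Y),
      le p q -> le (reindex f p) (reindex f q);
  reindex_id : forall X (p : fib X), reindex (idm X) p = p;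
  reindex_comp : forall X Y Z (f : Hom C X Y) (g : Hom C Y Z) (p : fib Z),
      reindex (comp g f) p = reindex f (reindex g p);
  meet : forall X, (fib X -> Prop) -> fib X;
  meet_lb : forall X (A : fib X -> Prop) p, A p -> le (meet A) p;
  meet_glb : forall X (A : fib X -> Prop) q,
      (forall p, A p -> le q p) -> le q (meet A);
  reindex_meet : forall X Y (f : Hom C X Y) (A : fib Y -> Prop),
      reindex f (meet A) = meet (fun q => exists p, A p /\ q = reindex f p)
}.
Arguments fib {C} _ _.
Arguments le {C} _ {X} _ _.
Arguments reindex {C} _ {X Y} _ _.
Arguments meet {C} _ {X} _.

Section Defs.
Context (C : Category) (Phi : PosFibration C) (Om : Ob C) (dOm : fib Phi Om).

Definition subset {T : Type} (A B : T -> Prop) : Prop := forall x, A x -> B x.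

Definition alpha (Y : Ob C) (S : Hom C Y Om -> Prop) : fib Phi Y :=
  meet Phi (fun p => exists k, S k /\ p = reindex Phi k dOm).

Definition gamma (Y : Ob C) (d : fib Phi Y) : Hom C Y Om -> Prop :=
  fun k => le Phi d (reindex Phi k dOm).

Definition cl (Y : Ob C) (S : Hom C Y Om -> Prop) : Hom C Y Om -> Prop :=
  gamma (alpha S).

Context (F : EndoFunctor C) (Lam : Type) (ev : Lam -> Hom C (Fob F Om) Om).

Definition LamS (Y : Ob C) (S : Hom C Y Om -> Prop) : Hom C (Fob F Y) Om -> Prop :=
  fun k => exists l h, S h /\ k = comp (ev l) (Fmap F h).

Definition Kop (X : Ob C) (d : fib Phi X) : fib Phi (Fob F X) :=
  alpha (LamS (gamma d)).

Definition closure_op {T : Type} (c : (T -> Prop) -> (T -> Prop)) : Prop :=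
  (forall A B, subset A B -> subset (c A) (c B)) /\
  (forall A, subset A (c A)) /\
  (forall A, c (c A) = c A).

Definition compatible (X : Ob C)
  (clp : (Hom C X Om -> Prop) -> (Hom C X Om -> Prop)) : Prop :=
  forall S, subset (LamS (clp (cl S))) (cl (LamS (clp S))).

Definition self_separation (X : Ob C)
  (clp : (Hom C X Om -> Prop) -> (Hom C X Om -> Prop)) : Prop :=
  forall (d : fib Phi X) (S : Hom C X Om -> Prop),
    S = clp S -> alpha S = d -> alpha (LamS S) = Kop d.

End Defs.

(* Main.v *)
Require Import Defs.

Section Aux.
Context (C : Category) (Phi : PosFibration C) (Om : Ob C) (dOm : fib Phi Om).

Lemma galois (Y : Ob C) (d : fib Phi Y) (S : Hom C Y Om -> Prop) :
  le Phi d (alpha dOm S) <-> subset S (gamma dOm d).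
Proof.
  split.
  - intros H k Hk. unfold gamma. eapply le_trans; [exact H|].
    apply meet_lb. exists k; auto.
  - intros H. apply meet_glb. intros p [k [Hk ->]]. apply H; exact Hk.
Qed.

Lemma cl_ext (Y : Ob C) (S : Hom C Y Om -> Prop) : subset S (cl dOm S).
Proof. apply galois, le_refl. Qed.

Lemma gamma_anti (Y : Ob C) (d e : fib Phi Y) :
  le Phi d e -> subset (gamma dOm e) (gamma dOm d).
Proof. intros H k Hk. unfold gamma in *. eapply le_trans; eauto. Qed.

Lemma cl_mono (Y : Ob C) (S T : Hom C Y Om -> Prop) :
  subset S T -> subset (cl dOm S) (cl dOm T).
Proof.
  intros H. unfold cl. apply gamma_anti. apply galois.
  intros k Hk. apply cl_ext. apply H, Hk.
Qed.

Lemma cl_idem (Y : Ob C) (S : Hom C Y Om -> Prop) :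
  subset (cl dOm (cl dOm S)) (cl dOm S).
Proof.
  unfold cl at 1. apply gamma_anti. apply galois.
  intros k Hk; exact Hk.
Qed.
End Aux.

Theorem lemma3 (C : Category) (Phi : PosFibration C) (Om : Ob C)
  (dOm : fib Phi Om) (F : EndoFunctor C) (Lam : Type)
  (ev : Lam -> Hom C (Fob F Om) Om) (X : Ob C)
  (clp : (Hom C X Om -> Prop) -> (Hom C X Om -> Prop))
  (Hclos : closure_op clp)
  (Hsub : forall S, subset (clp S) (cl dOm S)) :
  compatible dOm ev clp <-> self_separation dOm ev clp.
Proof.
  destruct Hclos as [Hmono [Hext Hidem]].
  assert (LamM : forall Y (A B : Hom C Y Om -> Prop), subset A B ->
            subset (LamS ev A) (LamS ev B)).
  { intros Y A B H k [l [h [Hh ->]]]. exists l, h; auto. }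
  split.
  - intros Hc d S HS Hd. subst d. unfold Kop.
    apply le_antisym.
    + apply galois.
      intros k Hk.
      assert (Hk' : LamS ev (clp (cl dOm S)) k).
      { eapply LamM; [|exact Hk]. apply Hext. }
      apply Hc in Hk'. rewrite <- HS in Hk'. exact Hk'.
    + apply galois.
      intros k Hk. apply cl_ext. eapply LamM; [|exact Hk]. apply cl_ext.
  - intros Hs S k Hk.
    set (T := clp S).
    assert (HT : T = clp T) by (unfold T; symmetry; apply Hidem).
    assert (Hcl : subset (cl dOm S) (cl dOm T)).
    { apply cl_mono. apply Hext. }
    assert (Hk2 : LamS ev (cl dOm T) k).
    { eapply LamM; [|exact Hk]. intros x Hx. apply Hcl.
      apply cl_idem. apply Hsub, Hx. }
    specialize (Hs _ T HT eq_refl). unfold Kop in Hs.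
    assert (Hg : subset (LamS ev (gamma dOm (alpha dOm T)))
                   (gamma dOm (alpha dOm (LamS ev (gamma dOm (alpha dOm T)))))).
    { apply galois. apply le_refl. }
    rewrite <- Hs in Hg. apply Hg. exact Hk2.
Qed.
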